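(* Let $p$ be a prime and let $r,s$ be integers with $1\leq r\leq s$. Suppose that $s\not\equiv 0,\pm1,\pm2,\dots,\pm(r-2)\pmod p$. Then $\lambda(r,s,p)$ is the standard partition, i.e. its $i$th part is $\lambda_i=r+s+1-2i$ for $1\leq i\leq r$.
   Context: For a positive integer $n$, let $J_n$ denote the $n\times n$ matrix with $1$s in positions $(i,i)$ for $1\le i\le n$ and $(i,i+1)$ for $1\le i<n$, and $0$s elsewhere (a unipotent Jordan block). For $1\le r\le s$ and a field $F$ of characteristic $p$, the Jordan canonical form of the $rs\times rs$ matrix $J_r\otimes J_s$ over $F$ is $J_{\lambda_1}\oplus\cdots\oplus J_{\lambda_r}$ with $\lambda_1\ge\cdots\ge\lambda_r>0$ and $\sum_i\lambda_i=rs$; this partition $\lambda(r,s,p)=(\lambda_1,\dots,\lambda_r)$ of $rs$ depends only on $r,s,p$. The standard partition of $rs$ is $(s+r-1,s+r-3,\dots,s-r+1)$. *)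

(* Defs.v *)
From mathcomp Require Import all_boot all_order all_algebra.
From mathcomp Require Export mxtens.
From mathcomp Require Import zify.
Set Implicit Arguments. Unset Strict Implicit. Unset Printing Implicit Defensive.
Import GRing.Theory Num.Theory.

Definition Jblock (F : fieldType) (n : nat) : 'M[F]_n :=
  (\matrix_(i < n, j < n) ((j == i :> nat) || (j == i.+1 :> nat))%:R)%R.

(* Parts of the standard partition (s+r-1, s+r-3, ..., s-r+1), 0-indexed:
   the part with 0-based index i < r is r + s - 1 - 2 i, i.e. r + s + 1 - 2 i'
   with the 1-based index i' = i + 1. *)
Definition std_part (r s : nat) (i : 'I_r) : nat := (r + s).-1 - i.*2.

Lemma std_sum_aux (a r : nat) : ((r.-1).*2 <= a ->
  \sum_(0 <= i < r) (a - i.*2) + r * r.-1 = r * a)%N.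
Proof.
elim: r => [|r IH] h; first by rewrite big_geq.
rewrite big_nat_recr //=.
case: r IH h => [|r] IH h; first by rewrite big_geq //=; lia.
have := IH ltac:(simpl in *; lia); simpl in *. lia.
Qed.

Lemma std_part_sum (r s : nat) : (r <= s)%N -> (\sum_(i < r) std_part s i = r * s)%N.
Proof.
move=> hrs; rewrite /std_part.
have := @std_sum_aux (r + s).-1 r ltac:(lia).
rewrite -(big_mkord xpredT (fun i => (r + s).-1 - i.*2)).
case: r hrs => [|r] hrs /=; first by rewrite big_geq.
lia.
Qed.

Definition std_jordan (F : fieldType) (r s : nat) (hrs : (r <= s)%N) : 'M[F]_(r * s) :=
  castmx (std_part_sum hrs, std_part_sum hrs)
         (\mxdiag_(i < r) Jblock F (std_part s i)).

(* Main.v *)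
Require Import Defs.
From mathcomp Require Import all_boot all_order all_algebra.
From mathcomp Require Import zify ring.
Import GRing.Theory Num.Theory.
Set Implicit Arguments. Unset Strict Implicit. Unset Printing Implicit Defensive.
Local Open Scope ring_scope.

Section Dev.
Variable F : fieldType.
Local Notation V r s := 'rV[F]_(r * s).

Definition co (r s : nat) (u : V r s) (a b : nat) : F :=
  match (insub a : option 'I_r), (insub b : option 'I_s) with
  | Some i, Some j => u 0 (mxtens_index (i, j))
  | _, _ => 0 end.
Arguments co {r s}.

Lemma co_in r s (u : V r s) (i : 'I_r) (j : 'I_s) :
  co u i j = u 0 (mxtens_index (i, j)).
Proof. by rewrite /co !valK. Qed.

Lemma co_out r s (u : V r s) a b : ~~ ((a < r) && (b < s))%N -> co u a b = 0.
Proof.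
rewrite /co; case: insubP => [i _ ea|//]; case: insubP => [j _ eb|//].
by rewrite -ea -eb !ltn_ord.
Qed.

Lemma co_add r s (u v : V r s) a b : co (u + v) a b = co u a b + co v a b.
Proof. by rewrite /co; case: (insub a : option 'I_r) => [i|]; case: (insub b : option 'I_s) => [j|]; rewrite ?mxE ?addr0. Qed.

Lemma co_scale r s c (u : V r s) a b : co (c *: u) a b = c * co u a b.
Proof. by rewrite /co; case: (insub a : option 'I_r) => [i|]; case: (insub b : option 'I_s) => [j|]; rewrite ?mxE ?mulr0. Qed.

Lemma co0 r s a b : co (0 : V r s) a b = 0.
Proof. by rewrite /co; case: (insub a : option 'I_r) => [i|]; case: (insub b : option 'I_s) => [j|]; rewrite ?mxE. Qed.

Lemma co_sum r s (I : Type) (l : seq I) (P : pred I) (G : I -> V r s) a b :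
  co (\sum_(i <- l | P i) G i) a b = \sum_(i <- l | P i) co (G i) a b.
Proof. exact: (big_morph (fun u => co u a b) (fun u v => co_add u v a b) (co0 r s a b)). Qed.

Lemma co_ext r s (u v : V r s) :
  (forall a b, (a < r)%N -> (b < s)%N -> co u a b = co v a b) -> u = v.
Proof.
move=> H; apply/rowP => k; rewrite -(mxtens_unindexK k); case: (mxtens_unindex k) => i j.
by have := H i j (ltn_ord i) (ltn_ord j); rewrite !co_in.
Qed.

Definition mk (r s : nat) (f : nat -> nat -> F) : V r s :=
  \row_k f (mxtens_unindex k).1 (mxtens_unindex k).2.

Lemma co_mk r s f a b : (a < r)%N -> (b < s)%N -> co (mk r s f) a b = f a b.
Proof.
move=> ha hb; have -> : a = Ordinal ha by []; have -> : b = Ordinal hb by [].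
by rewrite co_in mxE mxtens_indexK.
Qed.

Definition n0 r s (u : V r s) : V r s :=
  mk r s (fun a b => (if a is a'.+1 then co u a' b else 0) +
                     (if b is b'.+1 then co u a b' else 0)).

Definition phi r s (u : V r s) : V r.+1 s.+1 :=
  mk r.+1 s.+1 (fun a b => (s - b)%:R * (if a is a'.+1 then co u a' b else 0) -
                           (r - a)%:R * (if b is b'.+1 then co u a b' else 0)).

Definition e0 r s : V r s := mk r s (fun a b => ((a == 0%N) && (b == 0%N))%:R).

Fixpoint v (i r s : nat) {struct i} : V r s :=
  match i with
  | 0 => e0 r s
  | i'.+1 => match r, s return V r s with
             | r'.+1, s'.+1 => phi (v i' r' s')
             | _, _ => 0 end end.

Definition sig r s (u : V r s) : V r s :=
  mk r s (fun a b => \sum_(0 <= j < b.+1) 'C(a, b - j)%:R * co u a j).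

Lemma co_n0 r s (u : V r s) a b : (a < r)%N -> (b < s)%N ->
  co (n0 u) a b = (if a is a'.+1 then co u a' b else 0) +
                  (if b is b'.+1 then co u a b' else 0).
Proof. exact: co_mk. Qed.

Lemma co_phi r s (u : V r s) a b : (a < r.+1)%N -> (b < s.+1)%N ->
  co (phi u) a b = (s - b)%:R * (if a is a'.+1 then co u a' b else 0) -
                   (r - a)%:R * (if b is b'.+1 then co u a b' else 0).
Proof. exact: co_mk. Qed.

Lemma co_sig r s (u : V r s) a b : (a < r)%N -> (b < s)%N ->
  co (sig u) a b = \sum_(0 <= j < b.+1) 'C(a, b - j)%:R * co u a j.
Proof. exact: co_mk. Qed.

Lemma n0D r s (u w : V r s) : n0 (u + w) = n0 u + n0 w.
Proof.
apply: co_ext => a b ha hb; rewrite co_add !co_n0 //.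
case: a ha => [|a] ha; case: b hb => [|b] hb; rewrite ?co_add ?addr0 ?add0r //; ring.
Qed.
Lemma n0Z r s c (u : V r s) : n0 (c *: u) = c *: n0 u.
Proof.
apply: co_ext => a b ha hb; rewrite co_scale !co_n0 //.
case: a ha => [|a] ha; case: b hb => [|b] hb; rewrite ?co_scale ?mulr0 ?addr0 ?add0r //; ring.
Qed.
Lemma n00 r s : n0 (0 : V r s) = 0.
Proof. by have := n0Z 0 (0 : V r s); rewrite !scale0r. Qed.

Lemma phiD r s (u w : V r s) : phi (u + w) = phi u + phi w.
Proof.
apply: co_ext => a b ha hb; rewrite co_add !co_phi //.
case: a ha => [|a] ha; case: b hb => [|b] hb; rewrite ?co_add ?mulr0 ?subr0 ?sub0r ?oppr0 ?addr0; ring.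
Qed.
Lemma phiZ r s c (u : V r s) : phi (c *: u) = c *: phi u.
Proof.
apply: co_ext => a b ha hb; rewrite co_scale !co_phi //.
case: a ha => [|a] ha; case: b hb => [|b] hb; rewrite ?co_scale ?mulr0 ?subr0 ?sub0r ?oppr0 ?addr0; ring.
Qed.
Lemma phi0 r s : phi (0 : V r s) = 0.
Proof. by have := phiZ 0 (0 : V r s); rewrite !scale0r. Qed.

Lemma sigD r s (u w : V r s) : sig (u + w) = sig u + sig w.
Proof.
apply: co_ext => a b ha hb; rewrite co_add !co_sig // -big_split /=.
by apply: eq_bigr => j _; rewrite co_add mulrDr.
Qed.
Lemma sigZ r s c (u : V r s) : sig (c *: u) = c *: sig u.
Proof.
apply: co_ext => a b ha hb; rewrite co_scale !co_sig // mulr_sumr.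
by apply: eq_bigr => j _; rewrite co_scale mulrCA.
Qed.
Lemma sig0 r s : sig (0 : V r s) = 0.
Proof. by have := sigZ 0 (0 : V r s); rewrite !scale0r. Qed.


Lemma iter_n0D r s k (u w : V r s) : iter k (@n0 r s) (u + w) = iter k (@n0 r s) u + iter k (@n0 r s) w.
Proof. by elim: k => //= k ->; rewrite n0D. Qed.
Lemma iter_n0Z r s k c (u : V r s) : iter k (@n0 r s) (c *: u) = c *: iter k (@n0 r s) u.
Proof. by elim: k => //= k ->; rewrite n0Z. Qed.
Lemma iter_n00 r s k : iter k (@n0 r s) 0 = 0.
Proof. by elim: k => //= k ->; rewrite n00. Qed.
Lemma iter_n0_sum r s k (I : Type) (l : seq I) (P : pred I) (G : I -> V r s) :
  iter k (@n0 r s) (\sum_(i <- l | P i) G i) = \sum_(i <- l | P i) iter k (@n0 r s) (G i).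
Proof. exact: (big_morph _ (iter_n0D k) (iter_n00 r s k)). Qed.
Lemma phi_sum r s (I : Type) (l : seq I) (P : pred I) (G : I -> V r s) :
  phi (\sum_(i <- l | P i) G i) = \sum_(i <- l | P i) phi (G i).
Proof. exact: (big_morph _ (@phiD r s) (phi0 r s)). Qed.
Lemma sig_sum r s (I : Type) (l : seq I) (P : pred I) (G : I -> V r s) :
  sig (\sum_(i <- l | P i) G i) = \sum_(i <- l | P i) sig (G i).
Proof. exact: (big_morph _ (@sigD r s) (sig0 r s)). Qed.

Lemma mulB_co_n0 r s (u : V r s) x y : (x < r)%N -> (y <= s)%N ->
  (s - y)%:R * co (n0 u) x y = (s - y)%:R * ((if x is x'.+1 then co u x' y else 0) +
                  (if y is y'.+1 then co u x y' else 0)).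
Proof.
move=> hx hy; case: (ltnP y s) => h; first by rewrite co_n0.
have -> : y = s by lia.
by rewrite subnn !mul0r.
Qed.
Lemma mulB_co_n0' r s (u : V r s) x y : (x <= r)%N -> (y < s)%N ->
  (r - x)%:R * co (n0 u) x y = (r - x)%:R * ((if x is x'.+1 then co u x' y else 0) +
                  (if y is y'.+1 then co u x y' else 0)).
Proof.
move=> hx hy; case: (ltnP x r) => h; first by rewrite co_n0.
have -> : x = r by lia.
by rewrite subnn !mul0r.
Qed.

Lemma phi_n0 r s (u : V r s) : phi (n0 u) = n0 (phi u).
Proof.
have Hs y : (y <= s)%N -> (s - y)%:R = s%:R - y%:R :> F by move=> hy; rewrite natrB.
have Hr y : (y <= r)%N -> (r - y)%:R = r%:R - y%:R :> F by move=> hy; rewrite natrB.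
apply: co_ext => a b ha hb; rewrite co_phi // co_n0 //.
case: a ha => [|[|a]] ha; case: b hb => [|[|b]] hb /=;
  rewrite ?mulB_co_n0 ?mulB_co_n0' ?co_phi ?Hs ?Hr /=.
all: first [ring | lia].
Qed.

Lemma iter_phi r s k (u : V r s) : iter k (@n0 r.+1 s.+1) (phi u) = phi (iter k (@n0 r s) u).
Proof. by elim: k => //= k ->; rewrite phi_n0. Qed.

Lemma co_chain r s m a b : (a < r)%N -> (b < s)%N ->
  co (iter m (@n0 r s) (e0 r s)) a b = if (a + b == m)%N then 'C(m, a)%:R else 0.
Proof.
elim: m a b => [|m IH] a b ha hb.
  by rewrite /= co_mk //; case: a ha => [|a] ha; case: b hb => [|b] hb.
rewrite /= co_n0 //; case: a ha => [|a] ha; case: b hb => [|b] hb /=.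
- by rewrite addr0.
- rewrite add0r IH //; last lia. by rewrite !add0n eqSS !bin0.
- rewrite addr0 IH //; last lia. rewrite !addn0 eqSS binS.
  by case: eqP => [->|//]; rewrite (bin_small (ltnSn m)) add0n.
- rewrite !IH //; try lia. rewrite !addnS !addSn eqSS binS.
  by case: eqP => _; rewrite ?addr0 // natrD addrC.
Qed.

Lemma co_phi_top r s (u : V r s) : co (phi u) r s = 0.
Proof. by rewrite co_phi // !subnn !mul0r subrr. Qed.

Lemma phi_inj r s (u : V r s) : (forall k, (0 < k <= r)%N -> k%:R != 0 :> F) ->
  phi u = 0 -> u = 0.
Proof.
move=> Hk Hu; apply: co_ext => a b _ _; rewrite co0.
elim: a b => [|a IH] b.
  case: (ltnP 0 r) => hr; last by rewrite co_out //; apply/negP => /andP[]; lia.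
  case: (ltnP b s) => hb; last by rewrite co_out //; apply/negP => /andP[]; lia.
  have := co_phi u (a:=0) (b:=b.+1) (ltn0Sn r) hb; rewrite Hu co0 /= mulr0 sub0r.
  move/eqP; rewrite eq_sym oppr_eq0 mulf_eq0 => /orP[|/eqP //].
  by rewrite subn0 (negbTE (Hk r _)) //; lia.
case: (ltnP a.+1 r) => hr; last by rewrite co_out //; apply/negP => /andP[]; lia.
case: (ltnP b s) => hb; last by rewrite co_out //; apply/negP => /andP[]; lia.
have := co_phi u (a:=a.+1) (b:=b.+1) (ltnW hr) hb; rewrite Hu co0 /= IH mulr0 sub0r.
move/eqP; rewrite eq_sym oppr_eq0 mulf_eq0 => /orP[|/eqP //].
by rewrite (negbTE (Hk _ _)) //; lia.
Qed.

Definition lam r s i := ((r + s).-1 - i.*2)%N.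

Lemma vanish i r s : iter (lam r s i) (@n0 r s) (v i r s) = 0.
Proof.
elim: i r s => [|i IH] r s.
  apply: co_ext => a b ha hb; rewrite co0 co_chain //.
  by case: eqP => //; rewrite /lam; lia.
case: r => [|r]; case: s => [|s] /=; rewrite ?iter_n00 //.
have -> : lam r.+1 s.+1 i.+1 = lam r s i by rewrite /lam; lia.
by rewrite iter_phi IH phi0.
Qed.


Lemma sum_delta_nat n k (g : nat -> F) :
  \sum_(0 <= j < n) (if j == k then g j else 0) = if (k < n)%N then g k else 0.
Proof.
elim: n => [|n IH]; first by rewrite big_geq.
rewrite big_nat_recr //= IH; case: (ltngtP k n) => h.
- by rewrite ltnS (ltnW h) addr0.
- by rewrite ltnNge h addr0.
- by rewrite h ltnSn add0r.
Qed.

Lemma IND (Q : nat -> nat -> Prop)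
  (HQ : forall r s, Q r.+1 s.+1 -> [/\ Q r s, 'C(r + s, r)%:R != 0 :> F &
                                    forall k, (0 < k <= r)%N -> k%:R != 0 :> F])
  r s : (r <= s)%N -> Q r s -> forall c : nat -> nat -> F,
  \sum_(0 <= i < r) \sum_(0 <= j < lam r s i) c i j *: iter j (@n0 r s) (v i r s) = 0 ->
  forall i j, (i < r)%N -> (j < lam r s i)%N -> c i j = 0.
Proof.
elim: r s => [|r IH] s hrs hQ c Hsum i j hi hj; first by [].
case: s hrs hQ Hsum hj => [|s] // hrs hQ Hsum hj.
have [hQ' hC hK] := HQ _ _ hQ.
rewrite big_nat_recl // in Hsum.
have Hl0 : lam r.+1 s.+1 0 = (r + s).+1 by rewrite /lam; lia.
have E : \sum_(0 <= i < r) \sum_(0 <= j < lam r.+1 s.+1 i.+1)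
     c i.+1 j *: iter j (@n0 r.+1 s.+1) (v i.+1 r.+1 s.+1) =
   phi (\sum_(0 <= i < r) \sum_(0 <= j < lam r s i) c i.+1 j *: iter j (@n0 r s) (v i r s)).
  rewrite phi_sum; apply: eq_big_nat => i' hi'.
  rewrite (_ : lam r.+1 s.+1 i'.+1 = lam r s i'); last by rewrite /lam; lia.
  by rewrite phi_sum; apply: eq_bigr => j' _; rewrite phiZ -iter_phi.
rewrite E /= Hl0 in Hsum.
have c0 : forall j0, (j0 < (r + s).+1)%N -> c 0%N j0 = 0.
  move=> j0 hj0.
  have := congr1 (fun x => co (iter (r + s - j0) (@n0 r.+1 s.+1) x) r s) Hsum.
  rewrite /= iter_n0D iter_phi co_add co_phi_top addr0 iter_n00 co0 iter_n0_sum co_sum.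
  under eq_bigr do rewrite iter_n0Z co_scale -iterD co_chain //.
  rewrite (eq_big_nat _ _ (F2 := fun j => if j == j0 then c 0%N j * 'C(r + s, r)%:R else 0)).
    rewrite sum_delta_nat hj0 => /eqP; rewrite mulf_eq0 (negbTE hC) orbF => /eqP //.
  move=> j' hj'; case: eqP => h1; case: eqP => h2 //; try lia.
  by rewrite h1; congr (_ * _); congr (_%:R); congr 'C(_, _); lia.
  by rewrite mulr0.
move: Hsum; rewrite big_nat_cond big1 ?add0r; last first.
  by move=> j' /andP[/andP[_ hj'] _]; rewrite c0 // scale0r.
move/(phi_inj hK) => Hw.
case: i hi hj => [|i] hi hj; first by apply: c0; rewrite -Hl0.
apply: (IH s hrs hQ' (fun i j => c i.+1 j) Hw i j hi).
by move: hj; rewrite /lam; lia.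
Qed.


Lemma co_opp r s (u : V r s) a b : co (- u) a b = - co u a b.
Proof. by rewrite -scaleN1r co_scale mulN1r. Qed.

Lemma sum_tens r s (G : 'I_(r * s) -> F) :
  \sum_k G k = \sum_(i < r) \sum_(j < s) G (mxtens_index (i, j)).
Proof.
rewrite pair_big /= (reindex (@mxtens_index r s)) /=; last first.
  by exists (@mxtens_unindex r s) => k _; [apply: mxtens_indexK | apply: mxtens_unindexK].
by apply: eq_bigr => -[i j].
Qed.

Lemma sum_or2 n x y (g : nat -> F) : x != y ->
  \sum_(i < n) ((i == x :> nat) || (i == y :> nat))%:R * g i =
  (if (x < n)%N then g x else 0) + (if (y < n)%N then g y else 0).
Proof.
move=> hxy; rewrite -(big_mkord xpredT (fun i => ((i == x) || (i == y))%:R * g i)).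
rewrite (eq_big_nat _ _ (F2 := fun i => (if i == x then g i else 0) + (if i == y then g i else 0))).
  by rewrite big_split /= !sum_delta_nat.
move=> i _; case: eqP => [->|_]; case: eqP => [e|_] //=.
- by move: hxy; rewrite e eqxx.
- by rewrite mul1r addr0.
- by rewrite mul1r add0r.
- by rewrite mul0r addr0.
Qed.

Lemma sum_or_J n b (g : nat -> F) : (b < n)%N ->
  \sum_(j < n) ((b == j :> nat) || (b == j.+1 :> nat))%:R * g j =
  g b + (if b is b'.+1 then g b' else 0).
Proof.
move=> hb; rewrite -(big_mkord xpredT (fun j => ((b == j) || (b == j.+1))%:R * g j)).
rewrite (eq_big_nat _ _ (F2 := fun j => (if j == b then g j else 0) +
                                      (if j.+1 == b then g j else 0))).
  rewrite big_split /= sum_delta_nat hb; congr (_ + _).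
  case: b hb => [|b] hb; first by rewrite big1.
  by under eq_bigr do rewrite eqSS; rewrite sum_delta_nat ltnW.
move=> j _; rewrite ![b == _]eq_sym; case: eqP => [->|_]; case: eqP => [e|_] //=.
- by exfalso; move: e; lia.
- by rewrite mul1r addr0.
- by rewrite mul1r add0r.
- by rewrite mul0r addr0.
Qed.

Lemma co_mulA r s (u : V r s) a b : (a < r)%N -> (b < s)%N ->
  co (u *m (Jblock F r *t Jblock F s)) a b =
  co u a b + (if b is b'.+1 then co u a b' else 0) +
  ((if a is a'.+1 then co u a' b else 0) +
   (match a, b with a'.+1, b'.+1 => co u a' b' | _, _ => 0 end)).
Proof.
move=> ha hb; have -> : a = Ordinal ha by []; have -> : b = Ordinal hb by [].
rewrite co_in mxE sum_tens.
under eq_bigr => i _ do under eq_bigr => j _ do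
  rewrite tensmxE !mxE -co_in mulrC -mulrA.
under eq_bigr => i _ do rewrite -mulr_sumr sum_or_J //.
rewrite (sum_or_J (n:=r) (b:=a) (fun x => co u x b + (if b is b'.+1 then co u x b' else 0))) //=.
by case: a ha => [|a'] ha; case: b hb => [|b'] hb; rewrite ?addr0.
Qed.


Lemma binsum0 y (g : nat -> F) : \sum_(0 <= j < y.+1) 'C(0, y - j)%:R * g j = g y.
Proof.
rewrite big_nat_recr //= subnn bin0 mul1r big_nat_cond big1 ?add0r //.
move=> j /andP[/andP[_ hj] _]; rewrite bin0n.
have -> : (y - j == 0)%N = false by lia.
by rewrite mul0r.
Qed.

Lemma pascal_sum a b (g : nat -> F) :
  \sum_(0 <= j < b.+2) 'C(a.+1, b.+1 - j)%:R * g j =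
  \sum_(0 <= j < b.+2) 'C(a, b.+1 - j)%:R * g j + \sum_(0 <= j < b.+1) 'C(a, b - j)%:R * g j.
Proof.
rewrite !(big_nat_recr b.+1) //= subnn !bin0.
rewrite (eq_big_nat _ _ (F2 := fun j => 'C(a, b.+1 - j)%:R * g j + 'C(a, b - j)%:R * g j)).
  by rewrite big_split /=; ring.
move=> j hj; rewrite (_ : b.+1 - j = (b - j).+1)%N; last by lia.
by rewrite binS natrD mulrDl.
Qed.

Lemma sig_n0 r s (u : V r s) :
  sig (n0 u) = sig u *m (Jblock F r *t Jblock F s) - sig u.
Proof.
apply: co_ext => a b ha hb.
rewrite co_add co_opp co_mulA // co_sig //.
rewrite (eq_big_nat _ _ (F2 := fun j => 'C(a, b - j)%:R *
   ((if a is a'.+1 then co u a' j else 0) + (if j is j'.+1 then co u a j' else 0)))); last first.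
  by move=> j hj; rewrite co_n0 //; lia.
case: a ha => [|a] ha; case: b hb => [|b] hb /=.
- by rewrite big_nat1 /= !addr0 mulr0 subrr.
- rewrite binsum0 !co_sig; try lia.
  by rewrite !binsum0 add0r !addr0 addrAC subrr add0r.
- rewrite !big_nat1 !co_sig; try lia.
  rewrite !big_nat1 /= !bin0 !mul1r !addr0.
  by rewrite addrAC subrr add0r.
- under eq_bigr do rewrite mulrDr.
  rewrite big_split /= pascal_sum big_nat_recl //= mulr0 add0r.
  rewrite !co_sig; try lia.
  have -> : \sum_(0 <= i < b.+1) 'C(a.+1, b.+1 - i.+1)%:R * co u a.+1 i =
            \sum_(0 <= j < b.+1) 'C(a.+1, b - j)%:R * co u a.+1 j.
    by apply: eq_bigr => i _; rewrite subSS.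
  set X1 := \sum_(0 <= j < b.+2) _; set X2 := \sum_(0 <= j < b.+1) _;
  set X3 := \sum_(0 <= j < b.+1) _; set X4 := \sum_(0 <= j < b.+2) _.
  ring.
Qed.

Lemma sig_inj r s (u : V r s) : sig u = 0 -> u = 0.
Proof.
move=> H; apply: co_ext => a b ha hb; rewrite co0.
have K : forall n c, (c <= n)%N -> (c < s)%N -> co u a c = 0.
  elim=> [|n IH] c hcn hc; have := congr1 (fun x => co x a c) H;
    rewrite co0 co_sig // big_nat_recr //= subnn bin0 mul1r.
  - by rewrite big_geq ?add0r //; lia.
  - rewrite big_nat_cond big1 ?add0r // => j /andP[/andP[_ hj] _].
    by rewrite IH ?mulr0 //; lia.
by apply: (K b).
Qed.

End Dev.

Lemma cast_sim (F : fieldType) m n (e : m = n) (D : 'M[F]_m) (P0 : 'M[F]_(m, n))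
  (A : 'M[F]_n) : D *m P0 = P0 *m A ->
  castmx (e, erefl n) P0 *m A = castmx (e, e) D *m castmx (e, erefl n) P0.
Proof. by case: n / e A P0 => A P0 H; rewrite !castmx_id H. Qed.

Lemma cast_unit (F : fieldType) m n (e : m = n) (P0 : 'M[F]_(m, n)) :
  (forall u : 'rV_m, u *m P0 = 0 -> u = 0) -> castmx (e, erefl n) P0 \in unitmx.
Proof.
case: n / e P0 => P0 H; rewrite castmx_id -row_free_unit -kermx_eq0.
apply/eqP/row_matrixP => i; rewrite row0; apply: H.
by rewrite -row_mul mulmx_ker row0.
Qed.

Definition GoodN (p r s : nat) :=
  forall m, (m.+2 <= r)%N -> ~~ (p %| s + m)%N && ~~ (p %| s - m)%N.

Lemma GoodN_down p r s : GoodN p r.+1 s.+1 -> GoodN p r s.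
Proof.
move=> H m hm; apply/andP; split.
- case: m hm => [|m] hm.
    have /andP[_ h] := H 1%N ltac:(lia).
    by rewrite addn0; rewrite subn1 /= in h.
  have /andP[h _] := H m ltac:(lia).
  by rewrite addnS -addSn.
- have /andP[_ h] := H m.+1 ltac:(lia).
  by rewrite subSS in h.
Qed.

Lemma GoodN_bin p r s : prime p -> GoodN p r.+1 s.+1 -> ~~ (p %| 'C(r + s, r))%N.
Proof.
move=> pp H.
have K : forall m, (m <= r)%N -> ~~ (p %| (s + m) ^_ m)%N.
  elim=> [|m IH] hm.
    rewrite ffactn0 dvdn1; apply/eqP => e; by rewrite e in pp.
  rewrite addnS ffactSS Euclid_dvdM // negb_or IH ?andbT; last lia.
  have /andP[h _] := H m ltac:(lia).
  by rewrite -addSn.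
apply/negP => hd; have := K r (leqnn r); rewrite addnC -bin_ffact.
by rewrite dvdn_mulr.
Qed.

Lemma GoodN_k p r s : GoodN p r.+1 s.+1 -> forall k, (0 < k <= r)%N -> ~~ (p %| k)%N.
Proof.
move=> H k /andP[hk0 hkr]; apply/negP => hd.
case: (posnP p) => [p0|p0].
  by move: hd hk0; rewrite p0 dvd0n => /eqP ->.
have hp : (p <= r)%N by apply: leq_trans (dvdn_leq hk0 hd) hkr.
have hm : (s.+1 %% p < p)%N by rewrite ltn_mod.
have /andP[_ h] := H (s.+1 %% p)%N ltac:(lia).
apply: (negP h).
rewrite {1}(div.divn_eq s.+1 p) addnK.
exact: dvdn_mull (dvdnn p).
Qed.

Lemma GoodN_of p r s : (r <= s)%N ->
  (forall k : int, (`|k|%N + 2 <= r)%N -> ~~ (p%:Z %| s%:Z - k)%Z) -> GoodN p r s.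
Proof.
move=> hrs H m hm; apply/andP; split.
- have := H (- m%:Z); rewrite abszN absz_nat addn2 => /(_ hm).
  by rewrite opprK -PoszD dvdzE !absz_nat.
- have := H m%:Z; rewrite absz_nat addn2 => /(_ hm).
  by rewrite subzn ?dvdzE ?absz_nat //; lia.
Qed.

Unset Implicit Arguments.
Theorem theorem2 (p r s : nat) (hp : prime p) (hr : (1 <= r)%N) (hrs : (r <= s)%N)
  (hcong : forall k : int, (`|k|%N + 2 <= r)%N -> ~~ (p%:Z %| s%:Z - k)%Z)
  (F : fieldType) (hF : p \in [pchar F]) :
  exists P : 'M[F]_(r * s),
    P \in unitmx /\ P *m (Jblock F r *t Jblock F s) = std_jordan F hrs *m P.
Proof.
have G := GoodN_of hrs hcong.
have HQ : forall r s, GoodN p r.+1 s.+1 -> [/\ GoodN p r s, 'C(r + s, r)%:R != 0 :> F &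
                                    forall k, (0 < k <= r)%N -> k%:R != 0 :> F].
  move=> r' s' H; split; first exact: GoodN_down.
  - by rewrite -(dvdn_pcharf hF) GoodN_bin.
  - by move=> k hk; rewrite -(dvdn_pcharf hF); exact: GoodN_k H k hk.
have Hind := @IND F _ HQ r s hrs G.
set A := Jblock F r *t Jblock F s.
pose w (i j : nat) : 'rV[F]_(r * s) := sig (iter j (@n0 F r s) (v F i r s)).
pose B (i : 'I_r) : 'M[F]_(std_part s i, r * s) := \matrix_(j, k) w i j 0 k.
exists (castmx (std_part_sum hrs, erefl (r * s)) (\mxcol_(i < r) B i)).
split.
- apply: cast_unit => u Hu.
  rewrite -(submxrowK u) mul_mxrow_mxcol in Hu.
  have Hrow : forall i, submxrow u i *m B i =
      \sum_(j < std_part s i) (submxrow u i) 0 j *: w i j.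
    move=> i; rewrite mulmx_sum_row; apply: eq_bigr => j _; congr (_ *: _).
    by apply/rowP => k; rewrite !mxE.
  pose c (i j : nat) := \sum_(k < r | val k == i)
         \sum_(l < std_part s k | val l == j) (submxrow u k) 0 l.
  have Hc : forall (i : 'I_r) (j : 'I_(std_part s i)), c i j = (submxrow u i) 0 j.
    move=> i j; rewrite /c (big_pred1 i) => [|k]; last exact: val_eqE.
    by rewrite (big_pred1 j) // => l; exact: val_eqE.
  have Hs : \sum_(0 <= i < r) \sum_(0 <= j < lam r s i)
        c i j *: iter j (@n0 F r s) (v F i r s) = 0.
    apply: (@sig_inj F r s); rewrite sig_sum big_mkord.
    transitivity (\sum_i submxrow u i *m B i); last exact: Hu.
    apply: eq_bigr => i _; rewrite Hrow sig_sum big_mkord.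
    by apply: eq_bigr => j _; rewrite sigZ; congr (_ *: _); apply: (Hc i j).
  have Z : forall i, submxrow u i = 0.
    move=> i; apply/rowP => j; rewrite [RHS]mxE -Hc.
    exact: (Hind c Hs i j (ltn_ord i) (ltn_ord j)).
  by rewrite -(submxrowK u) (eq_mxrow Z) mxrow0.
- rewrite /std_jordan; apply: cast_sim.
  rewrite mul_mxdiag_mxcol mxcol_mul; apply: eq_mxcol => i; apply/matrixP => j k.
  have E1 : (B i *m A) j k = (w i j *m A) 0 k.
    by rewrite !mxE; apply: eq_bigr => l _; rewrite mxE.
  have E2 : w i j *m A = w i j + w i j.+1.
    by rewrite /w iterS sig_n0 addrC subrK.
  rewrite E1 E2 mxE.
  rewrite mxE (eq_bigr (fun l : 'I_(std_part s i) =>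
      ((l == j :> nat) || (l == j.+1 :> nat))%:R * w i l 0 k)); last first.
    by move=> l _; rewrite !mxE.
  rewrite (@sum_or2 F _ j j.+1 (fun l => w i l 0 k)) ?ltn_ord; last by rewrite neq_ltn ltnSn.
  case: ltnP => hj; first by [].
  have -> : j.+1 = lam r s i by move: hj (ltn_ord j); rewrite /std_part /lam; lia.
  have -> : w i (lam r s i) = 0.
    by rewrite /w (@vanish F i r s) sig0.
  by congr (_ + _); rewrite mxE.
Qed.
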